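(* Let $\Gamma$ be a game over an interval $I=[b,e]\subseteq[0,1]$ (in the setting described in the context), and let $l$ be a location with $l\notin L^{\mathrm{Goal}}$, $\mathrm{urg}(l)=0$, and at least one outgoing edge; assume that for every $l'$ with $(l,l')\in E$, the function $x\mapsto\mathrm{OptCost}(l',x)$ is a real-valued cost function on $I$. (i) If $l\in L^{\mathrm{Min}}$ and $h(x)=\min\{\mathrm{OptCost}(l',x):(l,l')\in E\}$, then for all $x\in I$, $\mathrm{OptCost}(l,x)=\mathrm{minC}(h,\pi(l))(x)$. (ii) If $l\in L^{\mathrm{Max}}$ and $h(x)=\max\{\mathrm{OptCost}(l',x):(l,l')\in E\}$, then for all $x\in I$, $\mathrm{OptCost}(l,x)=\mathrm{maxC}(h,\pi(l))(x)$.
   Context: Setting: a game $\Gamma$ over an interval $I=[b,e]\subseteq[0,1]$ consists of a finite set of locations $L=L^{\mathrm{Min}}\cup L^{\mathrm{Max}}$ (disjoint), goal locations $L^{\mathrm{Goal}}\subseteq L$ each assigned a cost function on $I$ (a continuous, non-increasing, piecewise affine function with finitely many pieces), an edge set $E\subseteq L\times L$ (all guards true, no resets, discrete transitions have price $0$), an urgency map $\mathrm{urg}:L\to\{0,1\}$ and price rates $\pi:L\to\mathbb{N}$. States are $L\times I$; discrete transitions $(l,x)\to(l',x)$ for $(l,l')\in E$ with price $0$; continuous transitions $(l,x)\xrightarrow{t}(l,x+t)$ for $t>0$, $\mathrm{urg}(l)=0$, $x+t\le e$, with price $\pi(l)t$. Runs are finite or infinite sequences of consecutive transitions, not containing infinitely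 many consecutive continuous transitions. Strategies of the minimizer (maximizer) map finite runs ending in states with location in $L^{\mathrm{Min}}$ ($L^{\mathrm{Max}}$) to an available transition; $\mathrm{Run}(s,\mu,\chi)$ is the unique resulting run. The cost of a run that first visits a goal location $l$ at state $(l,x)$ after $n$ transitions is (goal cost function of $l$)$(x)$ plus the sum of the prices of the first $n$ transitions, and $\infty$ if no goal location is visited. $\mathrm{OptCost}(s)=\inf_\mu\sup_\chi\mathrm{Cost}(\mathrm{Run}(s,\mu,\chi))$, assumed finite from every state. For $f:[b,e]\to\mathbb{R}$ and constant $c\ge0$: $\mathrm{minC}(f,c)(x)=\min_{0\le t\le e-x}(ct+f(x+t))$ and $\mathrm{maxC}(f,c)(x)=\max_{0\le t\le e-x}(ct+f(x+t))$. *)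

(* Defs.v *)
From Stdlib Require Import Reals Lra List ClassicalEpsilon.
Import ListNotations.
Open Scope R_scope.

Definition IsMin (P : R -> Prop) (m : R) : Prop := P m /\ forall y, P y -> m <= y.
Definition IsMax (P : R -> Prop) (m : R) : Prop := P m /\ forall y, P y -> y <= m.
(* min / max of a set of reals (well-defined whenever the min / max exists) *)
Definition MinOf (P : R -> Prop) : R := epsilon (inhabits 0) (IsMin P).
Definition MaxOf (P : R -> Prop) : R := epsilon (inhabits 0) (IsMax P).

(* minC(f,c)(x) = min_{0<=t<=e-x} (c t + f(x+t)),  maxC likewise; e = right end of I *)
Definition minC (e : R) (f : R -> R) (c : R) (x : R) : R :=
  MinOf (fun y => exists t, 0 <= t <= e - x /\ y = c * t + f (x + t)).
Definition maxC (e : R) (f : R -> R) (c : R) (x : R) : R :=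
  MaxOf (fun y => exists t, 0 <= t <= e - x /\ y = c * t + f (x + t)).

Definition cost_function (b e : R) (f : R -> R) : Prop :=
  (forall x y, b <= x -> x <= y -> y <= e -> f y <= f x) /\
  (forall x, b <= x <= e -> forall eps, 0 < eps -> exists delta, 0 < delta /\
      forall y, b <= y <= e -> Rabs (y - x) < delta -> Rabs (f y - f x) < eps) /\
  (exists (n : nat) (p : nat -> R),
      p 0%nat = b /\ p n = e /\
      (forall i, (i < n)%nat -> p i < p (S i)) /\
      (forall i, (i < n)%nat -> exists a c, forall x, p i <= x <= p (S i) -> f x = a * x + c)).

Record Game (Loc : Type) := {
  locs : list Loc;                       (* L is finite *)
  locs_complete : forall l, In l locs;
  isMin : Loc -> bool;                   (* true: l in L^Min, false: l in L^Max *)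
  goal : Loc -> option (R -> R);         (* Some f: l in L^Goal with cost function f *)
  edge : Loc -> Loc -> bool;
  urgent : Loc -> bool;                  (* urg(l) = 1 iff urgent l = true *)
  rate : Loc -> nat;
  lo : R;
  hi : R;
  lo_nonneg : 0 <= lo;
  lo_le_hi : lo <= hi;
  hi_le_1 : hi <= 1;
  goal_cost : forall l f, goal l = Some f -> cost_function lo hi f
}.
Arguments locs {Loc}. Arguments isMin {Loc}. Arguments goal {Loc}.
Arguments edge {Loc}. Arguments urgent {Loc}. Arguments rate {Loc}.
Arguments lo {Loc}. Arguments hi {Loc}.

Section Sem.
Context {Loc : Type} (G : Game Loc).

Definition State := (Loc * R)%type.
Definition inI (s : State) : Prop := lo G <= snd s <= hi G.

Inductive Act := Disc (l' : Loc) | Delay (t : R).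

Definition avail (s : State) (a : Act) : Prop :=
  match a with
  | Disc l' => edge G (fst s) l' = true
  | Delay t => 0 < t /\ urgent G (fst s) = false /\ snd s + t <= hi G
  end.

Definition next (s : State) (a : Act) : State :=
  match a with
  | Disc l' => (l', snd s)
  | Delay t => (fst s, snd s + t)
  end.

Definition aprice (s : State) (a : Act) : R :=
  match a with
  | Disc _ => 0
  | Delay t => INR (rate G (fst s)) * t
  end.

(* a finite run: start state + (chronological) list of transitions *)
Fixpoint cur (s : State) (h : list Act) : State :=
  match h with [] => s | a :: h' => cur (next s a) h' end.

Fixpoint valid_run (s : State) (h : list Act) : Prop :=
  match h with [] => True | a :: h' => avail s a /\ valid_run (next s a) h' end.

Fixpoint pathprice (s : State) (h : list Act) : R :=
  match h with [] => 0 | a :: h' => aprice s a + pathprice (next s a) h' end.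

(* a strategy maps a finite run (start state, transitions) to a transition;
   None is only allowed when no transition is available *)
Definition Strategy := State -> list Act -> option Act.

(* the player's own play from a finite run (used for the non-Zeno condition) *)
Fixpoint selfplay (sg : Strategy) (s0 : State) (h : list Act) (n : nat) : list Act :=
  match n with
  | O => h
  | S n' => let h' := selfplay sg s0 h n' in
            match sg s0 h' with Some a => h' ++ [a] | None => h' end
  end.

Definition is_delay (o : option Act) : Prop :=
  match o with Some (Delay _) => True | _ => False end.

(* valid strategy for player p (p = true: Min, p = false: Max) *)
Definition valid_strategy (p : bool) (sg : Strategy) : Prop :=
  forall s0 h, inI s0 -> valid_run s0 h -> isMin G (fst (cur s0 h)) = p ->
    (match sg s0 h with
     | Some a => avail (cur s0 h) a
     | None => forall a, ~ avail (cur s0 h) a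
     end) /\
    (* outcomes never contain infinitely many consecutive continuous transitions *)
    (exists n, ~ is_delay (sg s0 (selfplay sg s0 h n))).

(* Run(s, mu, chi): its prefix after n steps (stays put once the run is finite) *)
Fixpoint outcome (mu chi : Strategy) (s0 : State) (n : nat) : list Act :=
  match n with
  | O => []
  | S n' => let h := outcome mu chi s0 n' in
            let sg := if isMin G (fst (cur s0 h)) then mu else chi in
            match sg s0 h with Some a => h ++ [a] | None => h end
  end.

Definition FirstGoal (mu chi : Strategy) (s0 : State) (n : nat) : Prop :=
  length (outcome mu chi s0 n) = n /\
  goal G (fst (cur s0 (outcome mu chi s0 n))) <> None /\
  forall m, (m < n)%nat -> goal G (fst (cur s0 (outcome mu chi s0 m))) = None.

Inductive ER := Fin (r : R) | PInf.
Definition ER_le (a b : ER) : Prop :=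
  match a, b with
  | _, PInf => True
  | PInf, Fin _ => False
  | Fin x, Fin y => x <= y
  end.
Definition ER_is_sup (S : ER -> Prop) (u : ER) : Prop :=
  (forall a, S a -> ER_le a u) /\ (forall u', (forall a, S a -> ER_le a u') -> ER_le u u').
Definition ER_is_inf (S : ER -> Prop) (u : ER) : Prop :=
  (forall a, S a -> ER_le u a) /\ (forall u', (forall a, S a -> ER_le u' a) -> ER_le u' u).

Definition Cost (mu chi : Strategy) (s0 : State) : ER :=
  match excluded_middle_informative (exists n, FirstGoal mu chi s0 n) with
  | left H =>
      let n := proj1_sig (constructive_indefinite_description _ H) in
      let h := outcome mu chi s0 n in
      let s := cur s0 h in
      match goal G (fst s) with
      | Some f => Fin (f (snd s) + pathprice s0 h)
      | None => PInf
      end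
  | right _ => PInf
  end.

(* OptCost(s) = inf_mu sup_chi Cost(Run(s,mu,chi)) equals the real v *)
Definition IsOptCost (s : State) (v : R) : Prop :=
  exists U : Strategy -> ER,
    (forall mu, valid_strategy true mu ->
       ER_is_sup (fun c => exists chi, valid_strategy false chi /\ c = Cost mu chi s) (U mu)) /\
    ER_is_inf (fun c => exists mu, valid_strategy true mu /\ c = U mu) (Fin v).

End Sem.

(* Main.v *)
Require Import Defs.
From Stdlib Require Import Reals Lra Lia List ClassicalEpsilon Classical.
Import ListNotations.
Open Scope R_scope.


Lemma cur_app {Loc} (s : @State Loc) a b : cur s (a ++ b) = cur (cur s a) b.
Proof. revert s; induction a; simpl; auto. Qed.

Lemma valid_run_app {Loc} (G : Game Loc) s a b :
  valid_run G s (a ++ b) <-> valid_run G s a /\ valid_run G (cur s a) b.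
Proof. revert s; induction a as [|x a IH]; intro s; simpl. tauto. rewrite IH. tauto. Qed.

Lemma pathprice_app {Loc} (G : Game Loc) s a b :
  pathprice G s (a ++ b) = pathprice G s a + pathprice G (cur s a) b.
Proof. revert s; induction a as [|x a IH]; intro s; simpl. ring. rewrite IH. ring. Qed.

Lemma valid_inI {Loc} (G : Game Loc) s h : inI G s -> valid_run G s h -> inI G (cur s h).
Proof.
  revert s; induction h as [|a h IH]; intros s Hs Hv; simpl in *; auto.
  destruct Hv as [Ha Hv]. apply IH; auto.
  destruct a; unfold inI in *; simpl in *; try lra.
Qed.

Fixpoint splitD {Loc} (h : list (@Act Loc)) : option (list Act * list Act) :=
  match h with
  | [] => None
  | Disc l' :: r => Some ([Disc l'], r)
  | Delay t :: r => match splitD r with Some (p, q) => Some (Delay t :: p, q) | None => None end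
  end.

Definition isDelay {Loc} (a : @Act Loc) : Prop := match a with Delay _ => True | _ => False end.
Definition alldelay {Loc} (h : list (@Act Loc)) := Forall isDelay h.

Lemma splitD_app {Loc} (h : list (@Act Loc)) p r k :
  splitD h = Some (p, r) -> splitD (h ++ k) = Some (p, r ++ k).
Proof.
  revert p r; induction h as [|a h IH]; intros p r E; simpl in *. discriminate.
  destruct a. inversion E; subst; auto.
  destruct (splitD h) as [[p' q']|] eqn:E'; [|discriminate].
  rewrite (IH _ _ eq_refl). inversion E; subst; auto.
Qed.

Lemma splitD_eq {Loc} (h : list (@Act Loc)) p r : splitD h = Some (p, r) -> h = p ++ r.
Proof.
  revert p r; induction h as [|a h IH]; intros p r E; simpl in *. discriminate.
  destruct a. inversion E; subst; auto.
  destruct (splitD h) as [[p' q']|] eqn:E'; [|discriminate].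
  inversion E; subst. simpl. f_equal. auto.
Qed.

Lemma splitD_self {Loc} (h : list (@Act Loc)) p r : splitD h = Some (p, r) -> splitD p = Some (p, []).
Proof.
  revert p r; induction h as [|a h IH]; intros p r E; simpl in *. discriminate.
  destruct a. inversion E; subst; auto.
  destruct (splitD h) as [[p' q']|] eqn:E'; [|discriminate].
  inversion E; subst. simpl. rewrite (IH _ _ eq_refl). auto.
Qed.

Lemma splitD_pre {Loc} (p r : list (@Act Loc)) : splitD p = Some (p, []) -> splitD (p ++ r) = Some (p, r).
Proof. intro E. apply (splitD_app _ _ _ r) in E. exact E. Qed.

Lemma splitD_None {Loc} (h : list (@Act Loc)) : splitD h = None -> alldelay h.
Proof.
  induction h as [|a h IH]; intros E; simpl in *. constructor.
  destruct a. discriminate.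
  destruct (splitD h) as [[p' q']|] eqn:E'; [discriminate|].
  constructor; [exact I | apply IH; reflexivity].
Qed.

Lemma alldelay_splitD {Loc} (h : list (@Act Loc)) : alldelay h -> splitD h = None.
Proof.
  induction 1 as [|a h Ha Hh IH]; simpl; auto.
  destruct a; simpl in Ha; [contradiction|]. rewrite IH; auto.
Qed.

Lemma splitD_form {Loc} (p : list (@Act Loc)) r : splitD p = Some (p, r) -> exists q l', p = q ++ [Disc l'] /\ alldelay q.
Proof.
  revert r; induction p as [|a p IH]; intros r E; simpl in *. discriminate.
  destruct a. inversion E. exists [], l'. split; auto. constructor.
  destruct (splitD p) as [[p' q']|] eqn:E'; [|discriminate].
  inversion E. subst p'. destruct (IH _ eq_refl) as [q [l' [-> Hq]]].
  exists (Delay t :: q), l'. split; auto. constructor; simpl; auto.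
Qed.

Lemma alldelay_app {Loc} (q : list (@Act Loc)) l' : alldelay q -> splitD (q ++ [Disc l']) = Some (q ++ [Disc l'], []).
Proof.
  induction 1 as [|a h Ha Hh IH]; simpl; auto.
  destruct a; simpl in Ha; [contradiction|]. rewrite IH; auto.
Qed.

Lemma alldelay_loc {Loc} (s : @State Loc) h : alldelay h -> fst (cur s h) = fst s.
Proof.
  intro H; revert s; induction H as [|a h Ha Hh IH]; intro s; simpl; auto.
  destruct a; simpl in Ha; [contradiction|]. rewrite IH; auto.
Qed.

Lemma alldelay_cur {Loc} (G : Game Loc) (s : @State Loc) h : alldelay h -> valid_run G s h ->
  exists T, 0 <= T /\ cur s h = (fst s, snd s + T) /\ pathprice G s h = INR (rate G (fst s)) * T.
Proof.
  intro H; revert s; induction H as [|a h Ha Hh IH]; intros s Hv; simpl in *.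
  exists 0. destruct s; simpl; split; [lra|split]; [f_equal; ring|ring].
  destruct a; simpl in Ha; [contradiction|]. destruct Hv as [Hav Hv].
  destruct (IH _ Hv) as [T [HT [Hc Hp]]]. simpl in *. destruct Hav as [Ht _].
  exists (t + T). split; [lra|split]. rewrite Hc. f_equal; ring.
  rewrite Hp. ring.
Qed.

Lemma decomp {Loc} (G : Game Loc) (s : @State Loc) p :
  splitD p = Some (p, []) -> valid_run G s p ->
  exists l' t, 0 <= t /\ edge G (fst s) l' = true /\ cur s p = (l', snd s + t) /\
     pathprice G s p = INR (rate G (fst s)) * t.
Proof.
  intros E Hv. destruct (splitD_form _ _ E) as [q [l' [-> Hq]]].
  apply valid_run_app in Hv. destruct Hv as [Hv1 Hv2].
  destruct (alldelay_cur G s q Hq Hv1) as [T [HT [Hc Hp]]].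
  exists l', T. split; auto. simpl in Hv2. rewrite Hc in Hv2. simpl in Hv2.
  split; [tauto|]. rewrite cur_app, pathprice_app, Hc. simpl. split; auto. rewrite Hp; ring.
Qed.

Lemma firstn_alldelay {Loc} (p : list (@Act Loc)) m : splitD p = Some (p, []) -> (m < length p)%nat ->
  alldelay (firstn m p).
Proof.
  intros E Hm. destruct (splitD_form _ _ E) as [q [l' [-> Hq]]].
  rewrite length_app in Hm; simpl in Hm.
  rewrite firstn_app. replace (m - length q)%nat with 0%nat by lia. simpl. rewrite app_nil_r.
  rewrite <- (firstn_skipn m q) in Hq. apply Forall_app in Hq. tauto.
Qed.

Lemma selfplay_shift {Loc} (sg sg' : @Strategy Loc) s0 s1 p :
  (forall r, sg s0 (p ++ r) = sg' s1 r) -> forall r n, selfplay sg s0 (p ++ r) n = p ++ selfplay sg' s1 r n.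
Proof.
  intros H r n; induction n as [|n IH]; simpl; auto.
  rewrite IH, H. destruct (sg' s1 _); auto. rewrite app_assoc; auto.
Qed.

Lemma selfplay_ext {Loc} (sg : @Strategy Loc) s0 h n : exists k, selfplay sg s0 h n = h ++ k.
Proof.
  induction n as [|n [k IH]]; simpl. exists []; rewrite app_nil_r; auto.
  rewrite IH. destruct (sg s0 (h ++ k)). exists (k ++ [a]); rewrite app_assoc; auto. exists k; auto.
Qed.

Lemma selfplay_agree {Loc} (sg sg' : @Strategy Loc) s0 h :
  (forall k, sg s0 (h ++ k) = sg' s0 (h ++ k)) -> forall n, selfplay sg s0 h n = selfplay sg' s0 h n.
Proof.
  intros H n; induction n as [|n IH]; simpl; auto.
  rewrite <- IH. destruct (selfplay_ext sg s0 h n) as [k Hk]. rewrite Hk, H. auto.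
Qed.

Definition cond {Loc} (G : Game Loc) (sg : Strategy) (s0 : State) (h : list Act) : Prop :=
    (match sg s0 h with
     | Some a => avail G (cur s0 h) a
     | None => forall a, ~ avail G (cur s0 h) a
     end) /\
    (exists n, ~ is_delay (sg s0 (selfplay sg s0 h n))).

Definition valid_at {Loc} (G : Game Loc) (p : bool) (sg : Strategy) (s0 : State) : Prop :=
  forall h, valid_run G s0 h -> isMin G (fst (cur s0 h)) = p -> cond G sg s0 h.

Lemma valid_strategy_at {Loc} (G : Game Loc) p sg :
  valid_strategy G p sg <-> forall s0, inI G s0 -> valid_at G p sg s0.
Proof. unfold valid_strategy, valid_at, cond. split; intros H; intros; apply H; auto. Qed.

Lemma cond_agree {Loc} (G : Game Loc) (sg sg' : Strategy) s0 h :
  (forall k, sg s0 (h ++ k) = sg' s0 (h ++ k)) -> cond G sg s0 h -> cond G sg' s0 h.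
Proof.
  intros H [H1 [n H2]]. split.
  - specialize (H []). rewrite app_nil_r in H. rewrite <- H. auto.
  - exists n. rewrite <- (selfplay_agree sg sg' s0 h H n).
    destruct (selfplay_ext sg s0 h n) as [k Hk]. rewrite Hk, <- H, <- Hk. auto.
Qed.

Lemma cond_shift {Loc} (G : Game Loc) (sg sg' : Strategy) s0 p r :
  (forall r, sg s0 (p ++ r) = sg' (cur s0 p) r) ->
  (cond G sg s0 (p ++ r) <-> cond G sg' (cur s0 p) r).
Proof.
  intros H. unfold cond. rewrite H, cur_app. split; intros [H1 [n H2]]; split; auto; exists n.
  - rewrite (selfplay_shift sg sg' s0 (cur s0 p) p H) in H2. rewrite H in H2. auto.
  - rewrite (selfplay_shift sg sg' s0 (cur s0 p) p H). rewrite H. auto.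
Qed.

Lemma valid_at_ext {Loc} (G : Game Loc) P (sg sg' : Strategy) s0 :
  (forall h, sg s0 h = sg' s0 h) -> valid_at G P sg s0 -> valid_at G P sg' s0.
Proof. intros H V h Hv Hm. apply (cond_agree G sg); auto. Qed.

Lemma valid_shift {Loc} (G : Game Loc) P (sg sg' : Strategy) s0 p :
  valid_at G P sg s0 -> valid_run G s0 p -> (forall r, sg s0 (p ++ r) = sg' (cur s0 p) r) ->
  valid_at G P sg' (cur s0 p).
Proof.
  intros V Hp H r Hr Hm. apply (cond_shift G sg sg' s0 p r H). apply V.
  apply valid_run_app; auto. rewrite cur_app; auto.
Qed.

Definition patch {Loc} (sg : @Strategy Loc) (s1 : State) (k : list Act -> option Act) : Strategy :=
  fun s h => if excluded_middle_informative (s = s1) then k h else sg s h.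

Definition shiftS {Loc} (sg : @Strategy Loc) (s0 : State) (p : list Act) : Strategy :=
  patch sg (cur s0 p) (fun r => sg s0 (p ++ r)).

Lemma shiftS_eq {Loc} (sg : @Strategy Loc) s0 p r : shiftS sg s0 p (cur s0 p) r = sg s0 (p ++ r).
Proof. unfold shiftS, patch. destruct excluded_middle_informative; congruence. Qed.

Lemma shiftS_valid {Loc} (G : Game Loc) P (sg : Strategy) s0 p :
  valid_strategy G P sg -> inI G s0 -> valid_run G s0 p -> valid_strategy G P (shiftS sg s0 p).
Proof.
  intros V Hs Hp. apply valid_strategy_at. intros s Hs'. rewrite valid_strategy_at in V.
  destruct (classic (s = cur s0 p)) as [->|Hne].
  - apply valid_shift with (sg := sg) (p := p); auto. intros r; rewrite shiftS_eq; auto.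
  - apply valid_at_ext with (sg := sg); auto. intros h. unfold shiftS, patch.
    destruct excluded_middle_informative; congruence.
Qed.

Definition gl {Loc} (F : list Act -> option Act) (T : list Act -> Strategy) (d : Strategy)
  (s0 : @State Loc) : Strategy :=
  fun s h => if excluded_middle_informative (s = s0) then
     match splitD h with Some (q, r) => T q (cur s0 q) r | None => F h end
   else d s h.

Lemma gl_pre {Loc} F T d (s0 : @State Loc) p r : splitD p = Some (p, []) ->
  gl F T d s0 s0 (p ++ r) = T p (cur s0 p) r.
Proof.
  intros E. unfold gl. destruct excluded_middle_informative; [|congruence].
  rewrite (splitD_pre p r E). auto.
Qed.

Lemma gl_valid {Loc} (G : Game Loc) P F T d (s0 : @State Loc) :
  valid_strategy G P d ->
  (forall q, splitD q = Some (q, []) -> valid_run G s0 q -> valid_at G P (T q) (cur s0 q)) ->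
  (isMin G (fst s0) = P -> forall h, alldelay h -> valid_run G s0 h ->
     exists a, F h = Some a /\ avail G (cur s0 h) a /\
       (~ isDelay a \/ exists b, F (h ++ [a]) = Some b /\ ~ isDelay b)) ->
  valid_strategy G P (gl F T d s0).
Proof.
  intros Vd HT HF. apply valid_strategy_at. intros s Hs.
  destruct (classic (s = s0)) as [->|Hne].
  - intros h Hv Hm. destruct (splitD h) as [[q r]|] eqn:E.
    + pose proof (splitD_eq _ _ _ E) as ->. pose proof (splitD_self _ _ _ E) as Eq.
      apply valid_run_app in Hv. destruct Hv as [Hv1 Hv2].
      apply (cond_shift G _ (T q) s0 q r). intros r'; apply gl_pre; auto.
      apply HT; auto. rewrite <- cur_app; auto.
    + pose proof (splitD_None _ E) as Hd. rewrite alldelay_loc in Hm; auto.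
      destruct (HF Hm h Hd Hv) as [a [Fa [Ava Hb]]].
      assert (Gh : gl F T d s0 s0 h = Some a).
      { unfold gl. destruct excluded_middle_informative; [|congruence]. rewrite E; auto. }
      split. rewrite Gh; auto.
      destruct a as [l'|t].
      * exists 0%nat. simpl. rewrite Gh. simpl. auto.
      * destruct Hb as [Hb|[b [Fb Hb]]]. simpl in Hb; tauto.
        exists 1%nat. simpl. rewrite Gh. unfold gl. destruct excluded_middle_informative; [|congruence].
        rewrite alldelay_splitD. rewrite Fb. destruct b; simpl in *; tauto.
        apply Forall_app; split; auto. constructor; simpl; auto.
  - rewrite valid_strategy_at in Vd. apply valid_at_ext with (sg := d); auto. intros h. unfold gl.
    destruct excluded_middle_informative; congruence.
Qed.

Lemma outcome_shift {Loc} (G : Game Loc) mu chi mu' chi' s0 p m :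
  (forall r, mu s0 (p ++ r) = mu' (cur s0 p) r) -> (forall r, chi s0 (p ++ r) = chi' (cur s0 p) r) ->
  outcome G mu chi s0 m = p ->
  forall n, outcome G mu chi s0 (m + n) = p ++ outcome G mu' chi' (cur s0 p) n.
Proof.
  intros Hm Hc Ho n. induction n as [|n IH].
  - rewrite Nat.add_0_r, app_nil_r; auto.
  - rewrite Nat.add_succ_r. simpl. rewrite IH, cur_app.
    destruct (isMin G (fst (cur (cur s0 p) (outcome G mu' chi' (cur s0 p) n)))).
    + rewrite Hm. destruct (mu' _ _); auto. rewrite app_assoc; auto.
    + rewrite Hc. destruct (chi' _ _); auto. rewrite app_assoc; auto.
Qed.

Lemma outcome_grow {Loc} (G : Game Loc) mu chi s0 m k :
  exists q, outcome G mu chi s0 (m + k) = outcome G mu chi s0 m ++ q /\ (length q <= k)%nat.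
Proof.
  induction k as [|k [q [IH Hq]]].
  - exists []. rewrite Nat.add_0_r, app_nil_r; auto.
  - rewrite Nat.add_succ_r. simpl. rewrite IH.
    match goal with |- context [match ?X with _ => _ end] => destruct X end.
    exists (q ++ [a]). rewrite app_assoc. split; auto. rewrite length_app; simpl; lia.
    exists q; split; auto.
Qed.

Lemma outcome_len {Loc} (G : Game Loc) mu chi s0 n : (length (outcome G mu chi s0 n) <= n)%nat.
Proof.
  destruct (outcome_grow G mu chi s0 0 n) as [q [H Hq]]. simpl in H. rewrite H. auto.
Qed.

Lemma outcome_prefix {Loc} (G : Game Loc) mu chi s0 N m :
  length (outcome G mu chi s0 N) = N -> (m <= N)%nat ->
  outcome G mu chi s0 m = firstn m (outcome G mu chi s0 N).
Proof.
  intros HN Hm. destruct (outcome_grow G mu chi s0 m (N - m)) as [q [H Hq]].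
  replace (m + (N - m))%nat with N in H by lia. rewrite H in *.
  rewrite length_app in HN. pose proof (outcome_len G mu chi s0 m).
  rewrite firstn_app. replace (m - length (outcome G mu chi s0 m))%nat with 0%nat by lia.
  simpl. rewrite app_nil_r. rewrite firstn_all2; auto.
Qed.

Definition val {Loc} (G : Game Loc) mu chi s0 n : ER :=
  match goal G (fst (cur s0 (outcome G mu chi s0 n))) with
  | Some f => Fin (f (snd (cur s0 (outcome G mu chi s0 n))) + pathprice G s0 (outcome G mu chi s0 n))
  | None => PInf
  end.

Lemma FirstGoal_unique {Loc} (G : Game Loc) mu chi s0 n m :
  FirstGoal G mu chi s0 n -> FirstGoal G mu chi s0 m -> n = m.
Proof.
  intros [_ [Hn Hn']] [_ [Hm Hm']].
  destruct (Nat.lt_total n m) as [H|[H|H]]; auto.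
  - exfalso; apply Hn; apply Hm'; auto.
  - exfalso; apply Hm; apply Hn'; auto.
Qed.

Lemma Cost_FG {Loc} (G : Game Loc) mu chi s0 n :
  FirstGoal G mu chi s0 n -> Cost G mu chi s0 = val G mu chi s0 n.
Proof.
  intros H. unfold Cost. destruct excluded_middle_informative as [e|e].
  - destruct (constructive_indefinite_description _ e) as [m Hm]. simpl.
    rewrite (FirstGoal_unique G mu chi s0 m n Hm H). reflexivity.
  - exfalso; apply e; exists n; auto.
Qed.

Lemma Cost_noFG {Loc} (G : Game Loc) mu chi s0 :
  ~ (exists n, FirstGoal G mu chi s0 n) -> Cost G mu chi s0 = PInf.
Proof.
  intros H. unfold Cost. destruct excluded_middle_informative as [e|e]; auto. contradiction.
Qed.

Definition ERplus (c : R) (a : ER) : ER := match a with Fin r => Fin (c + r) | PInf => PInf end.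

Lemma Cost_shift {Loc} (G : Game Loc) mu chi mu' chi' (s0 : @State Loc) p :
  goal G (fst s0) = None -> splitD p = Some (p, []) ->
  (forall r, mu s0 (p ++ r) = mu' (cur s0 p) r) -> (forall r, chi s0 (p ++ r) = chi' (cur s0 p) r) ->
  outcome G mu chi s0 (length p) = p ->
  Cost G mu chi s0 = ERplus (pathprice G s0 p) (Cost G mu' chi' (cur s0 p)).
Proof.
  intros Hg E Hm Hc Ho.
  pose proof (outcome_shift G mu chi mu' chi' s0 p _ Hm Hc Ho) as OS.
  assert (Early : forall m, (m < length p)%nat -> goal G (fst (cur s0 (outcome G mu chi s0 m))) = None).
  { intros m Hm'. rewrite (outcome_prefix G mu chi s0 (length p) m); [| rewrite Ho; auto | lia].
    rewrite Ho, alldelay_loc; auto. apply firstn_alldelay; auto. }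
  assert (FGiff : forall n, FirstGoal G mu chi s0 (length p + n) <-> FirstGoal G mu' chi' (cur s0 p) n).
  { intros n. unfold FirstGoal. rewrite OS, cur_app, length_app. split.
    - intros [H1 [H2 H3]]. split; [lia|split; auto]. intros m Hm'.
      specialize (H3 (length p + m)%nat). rewrite OS, cur_app in H3. apply H3; lia.
    - intros [H1 [H2 H3]]. split; [lia|split; auto]. intros m Hm'.
      destruct (Nat.lt_ge_cases m (length p)) as [Hl|Hl]. apply Early; auto.
      replace m with (length p + (m - length p))%nat by lia. rewrite OS, cur_app. apply H3; lia. }
  destruct (classic (exists n, FirstGoal G mu' chi' (cur s0 p) n)) as [[n Hn]|Hno].
  - rewrite (Cost_FG G mu' chi' _ n Hn). rewrite (Cost_FG G mu chi s0 (length p + n)) by (apply FGiff; auto).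
    unfold val. rewrite OS, cur_app, pathprice_app.
    destruct (goal G (fst (cur (cur s0 p) _))); simpl; auto. f_equal. ring.
  - rewrite Cost_noFG; auto. rewrite Cost_noFG; auto.
    intros [N HN]. apply Hno.
    destruct (Nat.lt_ge_cases N (length p)) as [Hl|Hl].
    + destruct HN as [_ [HN _]]. exfalso; apply HN. apply Early; auto.
    + exists (N - length p)%nat. apply FGiff. replace (length p + (N - length p))%nat with N by lia. auto.
Qed.

Lemma min_nat (P : nat -> Prop) : (exists n, P n) -> exists n, P n /\ forall i, (i < n)%nat -> ~ P i.
Proof.
  intros [n Hn]. induction n as [n IH] using (well_founded_induction Wf_nat.lt_wf).
  destruct (classic (exists i, (i < n)%nat /\ P i)) as [[i [Hi Pi]]|H].
  - apply (IH i Hi Pi).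
  - exists n. split; auto. intros i Hi Pi. apply H; eauto.
Qed.

Lemma reach {Loc} (G : Game Loc) (sg : Strategy) (s0 : State) :
  inI G s0 -> valid_strategy G (isMin G (fst s0)) sg ->
  (exists l', edge G (fst s0) l' = true) ->
  exists p, splitD p = Some (p, []) /\ valid_run G s0 p /\
    forall mu chi, (forall h, (if isMin G (fst s0) then mu else chi) s0 h = sg s0 h) ->
      outcome G mu chi s0 (length p) = p.
Proof.
  intros Hs V [l' Hl'].
  rewrite valid_strategy_at in V. specialize (V s0 Hs).
  destruct (V [] I eq_refl) as [_ Hnz].
  destruct (min_nat _ Hnz) as [M [HM Hmin]].
  assert (Claim : forall j, (j <= M)%nat -> alldelay (selfplay sg s0 [] j) /\
     valid_run G s0 (selfplay sg s0 [] j) /\ length (selfplay sg s0 [] j) = j /\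
     forall mu chi, (forall h, (if isMin G (fst s0) then mu else chi) s0 h = sg s0 h) ->
       outcome G mu chi s0 j = selfplay sg s0 [] j).
  { induction j as [|j IH]; intros Hj.
    - simpl. repeat split; auto. constructor.
    - destruct (IH ltac:(lia)) as [Hd [Hv [Hlen Ho]]].
      assert (Hdel := Hmin j ltac:(lia)). apply NNPP in Hdel.
      destruct (V (selfplay sg s0 [] j) Hv) as [Hav _]. rewrite alldelay_loc; auto.
      destruct (sg s0 (selfplay sg s0 [] j)) as [[l''|t]|] eqn:Es; simpl in Hdel; try contradiction.
      assert (Hsp : selfplay sg s0 [] (S j) = selfplay sg s0 [] j ++ [Delay t]).
      { simpl. rewrite Es. auto. }
      rewrite Hsp. split; [|split; [|split]].
      + apply Forall_app; split; auto.
      + apply valid_run_app; split; auto; simpl; auto.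
      + rewrite length_app; simpl; lia.
      + intros mu chi Hsel. simpl. rewrite (Ho mu chi Hsel). rewrite alldelay_loc; auto.
        rewrite Hsel, Es. auto. }
  destruct (Claim M (le_n _)) as [Hd [Hv [Hlen Ho]]].
  destruct (V (selfplay sg s0 [] M) Hv) as [Hav _]. rewrite alldelay_loc; auto.
  destruct (sg s0 (selfplay sg s0 [] M)) as [[l''|t]|] eqn:Es.
  - exists (selfplay sg s0 [] M ++ [Disc l'']). split; [apply alldelay_app; auto|split].
    + apply valid_run_app; split; auto; simpl; auto.
    + intros mu chi Hsel. rewrite length_app, Hlen. simpl. rewrite Nat.add_1_r. simpl.
      rewrite (Ho mu chi Hsel). rewrite alldelay_loc; auto. rewrite Hsel, Es. auto.
  - exfalso. apply HM. simpl. auto.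
  - exfalso. apply (Hav (Disc l')). simpl. rewrite alldelay_loc; auto.
Qed.

Lemma sup_ge (S : ER -> Prop) u a : ER_is_sup S u -> S a -> ER_le a u.
Proof. intros [H _] Ha; auto. Qed.
Lemma sup_ub (S : ER -> Prop) u w : ER_is_sup S u -> (forall a, S a -> ER_le a (Fin w)) -> ER_le u (Fin w).
Proof. intros [_ H] Ha; auto. Qed.
Lemma inf_le (S : ER -> Prop) v a : ER_is_inf S (Fin v) -> S a -> ER_le (Fin v) a.
Proof. intros [H _] Ha; auto. Qed.
Lemma inf_lb (S : ER -> Prop) v w : ER_is_inf S (Fin v) -> (forall a, S a -> ER_le (Fin w) a) -> w <= v.
Proof. intros [_ H] Ha. exact (H _ Ha). Qed.
Lemma inf_eps (S : ER -> Prop) v eps : ER_is_inf S (Fin v) -> 0 < eps -> exists a, S a /\ ER_le a (Fin (v + eps)).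
Proof.
  intros Hi He. apply NNPP. intros Hno.
  assert (v + eps <= v); [|lra].
  apply (inf_lb S v (v + eps) Hi). intros a Ha. destruct a as [r|]; simpl; auto.
  destruct (Rle_dec (v + eps) r); auto. exfalso; apply Hno. exists (Fin r); split; auto. simpl; lra.
Qed.

Lemma exists_min_strat {Loc} (G : Game Loc) s v : IsOptCost G s v -> exists mu, valid_strategy G true mu.
Proof.
  intros [U [HU [_ Hinf]]]. apply NNPP; intros Hno.
  specialize (Hinf PInf). simpl in Hinf. apply Hinf. intros a [mu [Vm _]]. exfalso; apply Hno; eauto.
Qed.

Lemma exists_max_strat {Loc} (G : Game Loc) s v : IsOptCost G s v -> exists chi, valid_strategy G false chi.
Proof.
  intros H. destruct (exists_min_strat G s v H) as [mu Vm].
  destruct H as [U [HU _]]. destruct (HU mu Vm) as [_ Hs].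
  apply NNPP; intros Hno.
  specialize (Hs (match U mu with Fin r => Fin (r - 1) | PInf => Fin 0 end)).
  destruct (U mu); simpl in Hs.
  - assert (r <= r - 1); [|lra]. apply Hs. intros a [chi [Vc _]]. exfalso; apply Hno; eauto.
  - apply Hs. intros a [chi [Vc _]]. exfalso; apply Hno; eauto.
Qed.

Definition pp {Loc} (t : R) (l' : Loc) : list (@Act Loc) :=
  if Rlt_dec 0 t then [Delay t; Disc l'] else [Disc l'].
Definition FF {Loc} (t : R) (l' : Loc) (h : list (@Act Loc)) : option Act :=
  match h with [] => if Rlt_dec 0 t then Some (Delay t) else Some (Disc l') | _ => Some (Disc l') end.

Lemma pp_props {Loc} (G : Game Loc) (s0 : @State Loc) t l' :
  urgent G (fst s0) = false -> edge G (fst s0) l' = true -> 0 <= t -> snd s0 + t <= hi G ->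
  splitD (pp t l') = Some (pp t l', []) /\ valid_run G s0 (pp t l') /\ cur s0 (pp t l') = (l', snd s0 + t) /\
  pathprice G s0 (pp t l') = INR (rate G (fst s0)) * t.
Proof.
  intros Hu He Ht Hh. destruct s0 as [l0 x0]. simpl in *. unfold pp. destruct (Rlt_dec 0 t) as [Hp|Hp].
  - simpl. repeat split; auto. ring.
  - assert (t = 0) by lra. subst. simpl. repeat split; auto. rewrite Rplus_0_r; auto. ring.
Qed.

Lemma gl_none {Loc} F T d (s0 : @State Loc) h : splitD h = None -> gl F T d s0 s0 h = F h.
Proof. intros E. unfold gl. destruct excluded_middle_informative; [|congruence]. rewrite E; auto. Qed.

Lemma FF_ok {Loc} (G : Game Loc) (s0 : @State Loc) t l' :
  urgent G (fst s0) = false -> edge G (fst s0) l' = true -> 0 <= t -> snd s0 + t <= hi G ->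
  forall h, alldelay h -> valid_run G s0 h ->
     exists a, FF t l' h = Some a /\ avail G (cur s0 h) a /\
       (~ isDelay a \/ exists b, FF t l' (h ++ [a]) = Some b /\ ~ isDelay b).
Proof.
  intros Hu He Ht Hh h Hd Hv. destruct h as [|a h].
  - simpl. destruct (Rlt_dec 0 t) as [Hp|Hp].
    + exists (Delay t). repeat split; auto. right. exists (Disc l'). simpl; auto.
    + exists (Disc l'). repeat split; auto.
  - exists (Disc l'). split; [reflexivity|split; [unfold avail; rewrite (alldelay_loc s0 (a :: h) Hd); exact He | left; simpl; auto]].
Qed.

Lemma pp_outcome {Loc} (G : Game Loc) (s0 : @State Loc) t l' T d mu chi :
  (forall h, (if isMin G (fst s0) then mu else chi) s0 h = gl (FF t l') T d s0 s0 h) ->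
  outcome G mu chi s0 (length (pp t l')) = pp t l'.
Proof.
  intros Hsel. unfold pp. destruct (Rlt_dec 0 t) as [Hp|Hp].
  - simpl. rewrite Hsel, gl_none by reflexivity. unfold FF. destruct (Rlt_dec 0 t); [|lra].
    simpl. rewrite Hsel, gl_none by reflexivity. simpl. auto.
  - simpl. rewrite Hsel, gl_none by reflexivity. unfold FF. destruct (Rlt_dec 0 t); [lra|]. auto.
Qed.

Lemma ER_le_trans a b c : ER_le a b -> ER_le b c -> ER_le a c.
Proof. destruct a, b, c; simpl; intros; auto; try lra; contradiction. Qed.

Lemma GA_min {Loc} (G : Game Loc) (OptCost : Loc -> R -> R)
  (HOpt : forall l' x, lo G <= x <= hi G -> IsOptCost G (l', x) (OptCost l' x))
  l x U (Hx : lo G <= x <= hi G) (Hnogoal : goal G l = None) (Hout : exists l', edge G l l' = true)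
  (Hmin : isMin G l = true)
  (HU : forall mu, valid_strategy G true mu ->
     ER_is_sup (fun c => exists chi, valid_strategy G false chi /\ c = Cost G mu chi (l, x)) (U mu)) :
  forall mu, valid_strategy G true mu -> exists t l', 0 <= t /\ x + t <= hi G /\ edge G l l' = true /\
     ER_le (Fin (INR (rate G l) * t + OptCost l' (x + t))) (U mu).
Proof.
  intros mu Vm.
  assert (Hs : inI G (l, x)) by (unfold inI; simpl; lra).
  destruct (reach G mu (l, x) Hs) as [p [Ep [Vp Op]]]. simpl; rewrite Hmin; auto. simpl; auto.
  destruct (decomp G (l, x) p Ep Vp) as [l' [t [Ht [He [Hc Hpp]]]]].
  cbn [fst snd] in He, Hc, Hpp.
  assert (Hs1 : inI G (l', x + t)) by (rewrite <- Hc; apply valid_inI; auto).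
  exists t, l'. split; auto. split; [unfold inI in Hs1; simpl in Hs1; lra|]. split; auto.
  destruct (U mu) as [u|] eqn:Eu; simpl; auto.
  destruct (HOpt l' (x + t) Hs1) as [U1 [HU1 Hinf1]].
  set (mu1 := shiftS mu (l, x) p).
  assert (Vm1 : valid_strategy G true mu1) by (apply shiftS_valid; auto).
  assert (Hw := inf_le _ _ (U1 mu1) Hinf1 (ex_intro _ mu1 (conj Vm1 eq_refl))).
  assert (Hub : ER_le (U1 mu1) (Fin (u - INR (rate G l) * t))).
  { apply (sup_ub _ _ _ (HU1 mu1 Vm1)). intros a [chi1 [Vc1 ->]].
    set (chi := gl (fun _ => None) (fun _ => chi1) chi1 (l, x)).
    assert (Vc : valid_strategy G false chi).
    { apply gl_valid; auto. intros q _ Vq. rewrite valid_strategy_at in Vc1. apply Vc1. apply valid_inI; auto.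
      simpl. rewrite Hmin. discriminate. }
    assert (HC := sup_ge _ _ _ (HU mu Vm) (ex_intro _ chi (conj Vc eq_refl))).
    rewrite Eu in HC.
    rewrite (Cost_shift G mu chi mu1 chi1 (l, x) p) in HC; auto.
    - rewrite Hc, Hpp in HC. simpl in HC. destruct (Cost G mu1 chi1 (l', x + t)); simpl in *; lra.
    - intros r. unfold mu1. rewrite shiftS_eq. auto.
    - intros r. unfold chi. rewrite gl_pre; auto.
    - apply Op. intros h. simpl. rewrite Hmin. auto. }
  destruct (U1 mu1); simpl in *; lra.
Qed.

Lemma GA_max {Loc} (G : Game Loc) (OptCost : Loc -> R -> R)
  (HOpt : forall l' x, lo G <= x <= hi G -> IsOptCost G (l', x) (OptCost l' x))
  l x U (Hx : lo G <= x <= hi G) (Hnogoal : goal G l = None) (Hurg : urgent G l = false)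
  (Hmax : isMin G l = false)
  (HU : forall mu, valid_strategy G true mu ->
     ER_is_sup (fun c => exists chi, valid_strategy G false chi /\ c = Cost G mu chi (l, x)) (U mu)) :
  forall t l', 0 <= t -> x + t <= hi G -> edge G l l' = true -> forall mu, valid_strategy G true mu ->
     ER_le (Fin (INR (rate G l) * t + OptCost l' (x + t))) (U mu).
Proof.
  intros t l' Ht Hh He mu Vm.
  assert (Hs : inI G (l, x)) by (unfold inI; simpl; lra).
  destruct (pp_props G (l, x) t l' Hurg He Ht Hh) as [Ep [Vp [Hc Hpp]]].
  cbn [fst snd] in Hc, Hpp.
  set (p := pp t l') in *.
  assert (Hs1 : inI G (l', x + t)) by (rewrite <- Hc; apply valid_inI; auto).
  destruct (U mu) as [u|] eqn:Eu; simpl; auto.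
  destruct (HOpt l' (x + t) Hs1) as [U1 [HU1 Hinf1]].
  set (mu1 := shiftS mu (l, x) p).
  assert (Vm1 : valid_strategy G true mu1) by (apply shiftS_valid; auto).
  assert (Hw := inf_le _ _ (U1 mu1) Hinf1 (ex_intro _ mu1 (conj Vm1 eq_refl))).
  assert (Hub : ER_le (U1 mu1) (Fin (u - INR (rate G l) * t))).
  { apply (sup_ub _ _ _ (HU1 mu1 Vm1)). intros a [chi1 [Vc1 ->]].
    set (chi := gl (FF t l') (fun _ => chi1) chi1 (l, x)).
    assert (Vc : valid_strategy G false chi).
    { apply gl_valid; auto. intros q _ Vq. rewrite valid_strategy_at in Vc1. apply Vc1. apply valid_inI; auto.
      intros _. apply FF_ok; auto. }
    assert (HC := sup_ge _ _ _ (HU mu Vm) (ex_intro _ chi (conj Vc eq_refl))).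
    rewrite Eu in HC.
    rewrite (Cost_shift G mu chi mu1 chi1 (l, x) p) in HC; auto.
    - rewrite Hc, Hpp in HC. simpl in HC. destruct (Cost G mu1 chi1 (l', x + t)); simpl in *; lra.
    - intros r. unfold mu1. rewrite shiftS_eq. auto.
    - intros r. unfold chi. rewrite gl_pre; auto.
    - apply (pp_outcome G (l, x) t l' (fun _ => chi1) chi1). intros h. simpl. rewrite Hmax. auto. }
  destruct (U1 mu1); simpl in *; lra.
Qed.

Lemma GB_min {Loc} (G : Game Loc) (OptCost : Loc -> R -> R)
  (HOpt : forall l' x, lo G <= x <= hi G -> IsOptCost G (l', x) (OptCost l' x))
  l x U v (Hx : lo G <= x <= hi G) (Hnogoal : goal G l = None) (Hurg : urgent G l = false)
  (Hmin : isMin G l = true)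
  (HU : forall mu, valid_strategy G true mu ->
     ER_is_sup (fun c => exists chi, valid_strategy G false chi /\ c = Cost G mu chi (l, x)) (U mu))
  (Hinf : ER_is_inf (fun c => exists mu, valid_strategy G true mu /\ c = U mu) (Fin v)) :
  forall t l', 0 <= t -> x + t <= hi G -> edge G l l' = true -> forall eps, 0 < eps ->
     v <= INR (rate G l) * t + OptCost l' (x + t) + eps.
Proof.
  intros t l' Ht Hh He eps Heps.
  assert (Hs : inI G (l, x)) by (unfold inI; simpl; lra).
  destruct (pp_props G (l, x) t l' Hurg He Ht Hh) as [Ep [Vp [Hc Hpp]]].
  cbn [fst snd] in Hc, Hpp.
  set (p := pp t l') in *.
  assert (Hs1 : inI G (l', x + t)) by (rewrite <- Hc; apply valid_inI; auto).
  destruct (HOpt l' (x + t) Hs1) as [U1 [HU1 Hinf1]].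
  destruct (inf_eps _ _ eps Hinf1 Heps) as [a [[mu' [Vm' ->]] Ha]].
  set (mu := gl (FF t l') (fun _ => mu') mu' (l, x)).
  assert (Vm : valid_strategy G true mu).
  { apply gl_valid; auto. intros q _ Vq. rewrite valid_strategy_at in Vm'. apply Vm'. apply valid_inI; auto.
    intros _. apply FF_ok; auto. }
  assert (Hv := inf_le _ _ (U mu) Hinf (ex_intro _ mu (conj Vm eq_refl))).
  assert (Hub : ER_le (U mu) (Fin (INR (rate G l) * t + (OptCost l' (x + t) + eps)))).
  { apply (sup_ub _ _ _ (HU mu Vm)). intros a [chi [Vc ->]].
    set (chi1 := shiftS chi (l, x) p).
    assert (Vc1 : valid_strategy G false chi1) by (apply shiftS_valid; auto).
    rewrite (Cost_shift G mu chi mu' chi1 (l, x) p); auto.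
    - rewrite Hc, Hpp. simpl.
      assert (HC := sup_ge _ _ _ (HU1 mu' Vm') (ex_intro _ chi1 (conj Vc1 eq_refl))).
      assert (HC2 := ER_le_trans _ _ _ HC Ha).
      destruct (Cost G mu' chi1 (l', x + t)); simpl in *; lra.
    - intros r. unfold mu. rewrite gl_pre; auto.
    - intros r. unfold chi1. rewrite shiftS_eq. auto.
    - apply (pp_outcome G (l, x) t l' (fun _ => mu') mu'). intros h. simpl. rewrite Hmin. auto. }
  destruct (U mu); simpl in *; lra.
Qed.

Definition Kgood {Loc} (G : Game Loc) (OptCost : Loc -> R -> R) eps (s : @State Loc) (m : Strategy) : Prop :=
  valid_strategy G true m /\ forall chi, valid_strategy G false chi ->
    ER_le (Cost G m chi s) (Fin (OptCost (fst s) (snd s) + eps)).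

Lemma Kgood_ex {Loc} (G : Game Loc) (OptCost : Loc -> R -> R)
  (HOpt : forall l' x, lo G <= x <= hi G -> IsOptCost G (l', x) (OptCost l' x)) eps s :
  0 < eps -> inI G s -> exists m, Kgood G OptCost eps s m.
Proof.
  intros He Hs. destruct s as [l0 x0]. destruct (HOpt l0 x0 Hs) as [U [HU Hinf]].
  destruct (inf_eps _ _ eps Hinf He) as [a [[mu' [Vm' ->]] Ha]].
  exists mu'. split; auto. intros chi Vc. simpl.
  apply (ER_le_trans _ (U mu')); auto. apply (sup_ge _ _ _ (HU mu' Vm')). eauto.
Qed.

Lemma GB_max {Loc} (G : Game Loc) (OptCost : Loc -> R -> R)
  (HOpt : forall l' x, lo G <= x <= hi G -> IsOptCost G (l', x) (OptCost l' x))
  l x U v (Hx : lo G <= x <= hi G) (Hnogoal : goal G l = None) (Hout : exists l', edge G l l' = true)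
  (Hmax : isMin G l = false)
  (HU : forall mu, valid_strategy G true mu ->
     ER_is_sup (fun c => exists chi, valid_strategy G false chi /\ c = Cost G mu chi (l, x)) (U mu))
  (Hinf : ER_is_inf (fun c => exists mu, valid_strategy G true mu /\ c = U mu) (Fin v)) :
  forall eps, 0 < eps -> forall M,
    (forall t l', 0 <= t -> x + t <= hi G -> edge G l l' = true -> INR (rate G l) * t + OptCost l' (x + t) <= M) ->
    v <= M + eps.
Proof.
  intros eps Heps M HM.
  assert (Hs : inI G (l, x)) by (unfold inI; simpl; lra).
  destruct (exists_min_strat G _ _ (HOpt l x Hx)) as [d Vd].
  set (K := fun s => epsilon (inhabits d) (Kgood G OptCost eps s)).
  assert (HK : forall s, inI G s -> Kgood G OptCost eps s (K s)).
  { intros s Hs'. unfold K. apply epsilon_spec. apply Kgood_ex; auto. }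
  set (mu := gl (fun _ => None) (fun q => K (cur (l, x) q)) d (l, x)).
  assert (Vm : valid_strategy G true mu).
  { apply gl_valid; auto.
    - intros q _ Vq. assert (Hq := valid_inI G _ _ Hs Vq). destruct (HK _ Hq) as [Vk _].
      rewrite valid_strategy_at in Vk. apply Vk; auto.
    - simpl. rewrite Hmax. discriminate. }
  assert (Hv := inf_le _ _ (U mu) Hinf (ex_intro _ mu (conj Vm eq_refl))).
  assert (Hub : ER_le (U mu) (Fin (M + eps))).
  { apply (sup_ub _ _ _ (HU mu Vm)). intros a [chi [Vc ->]].
    destruct (reach G chi (l, x) Hs) as [p [Ep [Vp Op]]]. simpl; rewrite Hmax; auto. simpl; auto.
    destruct (decomp G (l, x) p Ep Vp) as [l' [t [Ht [He [Hc Hpp]]]]].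
    cbn [fst snd] in He, Hc, Hpp.
    assert (Hs1 : inI G (l', x + t)) by (rewrite <- Hc; apply valid_inI; auto).
    set (chi1 := shiftS chi (l, x) p).
    assert (Vc1 : valid_strategy G false chi1) by (apply shiftS_valid; auto).
    rewrite (Cost_shift G mu chi (K (cur (l, x) p)) chi1 (l, x) p); auto.
    - destruct (HK _ (valid_inI G _ _ Hs Vp)) as [_ Hk].
      specialize (Hk chi1 Vc1). rewrite Hc in Hk |- *. rewrite Hpp. simpl in Hk.
      assert (HMt := HM t l' Ht ltac:(unfold inI in Hs1; simpl in Hs1; lra) He).
      destruct (Cost G (K (l', x + t)) chi1 (l', x + t)); simpl in *; lra.
    - intros r. unfold mu. rewrite gl_pre; auto.
    - intros r. unfold chi1. rewrite shiftS_eq. auto.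
    - apply Op. intros h. simpl. rewrite Hmax. auto. }
  destruct (U mu); simpl in *; lra.
Qed.

Lemma finite_argmin {A} (L : list A) (P : A -> Prop) (m : A -> R) :
  (exists a, In a L /\ P a) -> exists a, In a L /\ P a /\ forall b, In b L -> P b -> m a <= m b.
Proof.
  induction L as [|z L IH]; intros [a [Ha Pa]]. destruct Ha.
  destruct (classic (exists a, In a L /\ P a)) as [Hex|Hno].
  - destruct (IH Hex) as [a' [Ha' [Pa' Hm]]].
    destruct (classic (P z)) as [Pz|Pz].
    + destruct (Rle_dec (m z) (m a')).
      * exists z. split; [left; auto|split; auto]. intros b [<-|Hb] Pb. lra. specialize (Hm b Hb Pb); lra.
      * exists a'. split; [right; auto|split; auto]. intros b [<-|Hb] Pb. lra. auto.
    + exists a'. split; [right; auto|split; auto]. intros b [<-|Hb] Pb. contradiction. auto.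
  - destruct Ha as [<-|Ha]; [|exfalso; apply Hno; eauto].
    exists z. split; [left; auto|split; auto]. intros b [<-|Hb] Pb. lra. exfalso; apply Hno; eauto.
Qed.

Lemma MinOf_eq P m : IsMin P m -> MinOf P = m.
Proof.
  intros H. unfold MinOf. pose proof (epsilon_spec (inhabits 0) (IsMin P) (ex_intro _ m H)) as H2.
  destruct H as [H1 H1']. destruct H2 as [H2 H2']. specialize (H1' _ H2). specialize (H2' _ H1). lra.
Qed.

Lemma MaxOf_eq P m : IsMax P m -> MaxOf P = m.
Proof.
  intros H. unfold MaxOf. pose proof (epsilon_spec (inhabits 0) (IsMax P) (ex_intro _ m H)) as H2.
  destruct H as [H1 H1']. destruct H2 as [H2 H2']. specialize (H1' _ H2). specialize (H2' _ H1). lra.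
Qed.

Definition rcont (a b : R) (f : R -> R) : Prop :=
  forall x, a <= x <= b -> forall eps, 0 < eps -> exists delta, 0 < delta /\
      forall y, a <= y <= b -> Rabs (y - x) < delta -> Rabs (f y - f x) < eps.

Definition clamp (a b y : R) := Rmax a (Rmin b y).

Lemma clamp_in a b y : a <= b -> a <= clamp a b y <= b.
Proof. intros. unfold clamp, Rmax, Rmin. repeat destruct Rle_dec; lra. Qed.

Lemma clamp_id a b y : a <= y <= b -> clamp a b y = y.
Proof. intros. unfold clamp, Rmax, Rmin. repeat destruct Rle_dec; lra. Qed.

Lemma clamp_lip a b y z : a <= b -> Rabs (clamp a b y - clamp a b z) <= Rabs (y - z).
Proof.
  intros. unfold clamp, Rmax, Rmin. unfold Rabs. repeat destruct Rle_dec; repeat destruct Rcase_abs; lra.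
Qed.

Lemma cont_clamp a b x f : a <= b -> rcont a b f -> forall t0, continuity_pt (fun t => f (clamp a b (x + t))) t0.
Proof.
  intros Hab Hf t0. unfold continuity_pt, continue_in, limit1_in, limit_in. simpl. unfold R_dist.
  intros eps Heps. destruct (Hf (clamp a b (x + t0)) (clamp_in a b _ Hab) eps Heps) as [d [Hd Hd']].
  exists d. split; [lra|]. intros z [_ Hz]. apply Hd'. apply clamp_in; auto.
  eapply Rle_lt_trans. apply clamp_lip; auto. replace (x + z - (x + t0)) with (z - t0) by ring. auto.
Qed.

Lemma pair_min {A} (L : list A) (P : A -> Prop) (f : A -> R -> R) (c a b x : R) :
  a <= x <= b -> (exists z, In z L /\ P z) -> (forall z, P z -> rcont a b (f z)) ->
  exists t z, 0 <= t /\ x + t <= b /\ In z L /\ P z /\ forall s w, 0 <= s -> x + s <= b -> In w L -> P w ->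
     c * t + f z (x + t) <= c * s + f w (x + s).
Proof.
  intros Hx Hne Hc.
  set (E := fun z s => c * s + f z (x + s)).
  set (tm := fun z => epsilon (inhabits 0) (fun t => 0 <= t <= b - x /\ forall s, 0 <= s <= b - x -> E z t <= E z s)).
  assert (Htm : forall z, P z -> 0 <= tm z <= b - x /\ forall s, 0 <= s <= b - x -> E z (tm z) <= E z s).
  { intros z Pz. unfold tm. apply epsilon_spec.
    destruct (continuity_ab_min (fun t => c * t + f z (clamp a b (x + t))) 0 (b - x)) as [m [Hm Hm']].
    lra.
    intros t _. apply (continuity_pt_plus (mult_real_fct c id) (fun t => f z (clamp a b (x + t)))).
    apply continuity_pt_scal, derivable_continuous_pt, derivable_pt_id. apply cont_clamp; auto. lra.
    exists m. split; auto. intros s Hs. specialize (Hm s Hs). unfold E.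
    rewrite !clamp_id in Hm by lra. auto. }
  destruct (finite_argmin L P (fun z => E z (tm z)) Hne) as [z [Hz [Pz Hmin]]].
  exists (tm z), z. destruct (Htm z Pz) as [H1 H2]. split; [lra|split; [lra|split; auto; split; auto]].
  intros s w Hs Hs' Hw Pw. change (E z (tm z) <= E w s).
  eapply Rle_trans. apply (Hmin w Hw Pw). apply (Htm w Pw). lra.
Qed.

Lemma pair_max {A} (L : list A) (P : A -> Prop) (f : A -> R -> R) (c a b x : R) :
  a <= x <= b -> (exists z, In z L /\ P z) -> (forall z, P z -> rcont a b (f z)) ->
  exists t z, 0 <= t /\ x + t <= b /\ In z L /\ P z /\ forall s w, 0 <= s -> x + s <= b -> In w L -> P w ->
     c * s + f w (x + s) <= c * t + f z (x + t).
Proof.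
  intros Hx Hne Hc.
  destruct (pair_min L P (fun z y => - f z y) (- c) a b x Hx Hne) as [t [z [H1 [H2 [H3 [H4 H5]]]]]].
  - intros z Pz y Hy eps He. destruct (Hc z Pz y Hy eps He) as [d [Hd Hd']]. exists d; split; auto.
    intros y' Hy' Hyy. replace (- f z y' - - f z y) with (- (f z y' - f z y)) by ring. rewrite Rabs_Ropp. auto.
  - exists t, z. repeat split; auto. intros s w Hs Hs' Hw Pw. specialize (H5 s w Hs Hs' Hw Pw). lra.
Qed.

Lemma eps_le a b : (forall eps, 0 < eps -> a <= b + eps) -> a <= b.
Proof. intros H. destruct (Rle_dec a b); auto. specialize (H ((a - b) / 2) ltac:(lra)). lra. Qed.

Theorem lemma4 (Loc : Type) (G : Game Loc) (OptCost : Loc -> R -> R)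
  (HOpt : forall l' x, lo G <= x <= hi G -> IsOptCost G (l', x) (OptCost l' x))
  (l : Loc)
  (Hnogoal : goal G l = None)
  (Hurg : urgent G l = false)
  (Hout : exists l', edge G l l' = true)
  (Hsucc : forall l', edge G l l' = true -> cost_function (lo G) (hi G) (OptCost l')) :
  (isMin G l = true ->
     forall x, lo G <= x <= hi G ->
       OptCost l x =
       minC (hi G) (fun y => MinOf (fun v => exists l', edge G l l' = true /\ v = OptCost l' y))
            (INR (rate G l)) x) /\
  (isMin G l = false ->
     forall x, lo G <= x <= hi G ->
       OptCost l x =
       maxC (hi G) (fun y => MaxOf (fun v => exists l', edge G l l' = true /\ v = OptCost l' y))
            (INR (rate G l)) x).
Proof.
  assert (Hne : exists z, In z (locs G) /\ edge G l z = true).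
  { destruct Hout as [z Hz]. exists z; split; auto. apply locs_complete. }
  assert (Hc : forall z, edge G l z = true -> rcont (lo G) (hi G) (OptCost z)).
  { intros z Hz. destruct (Hsucc z Hz) as [_ [H _]]. exact H. }
  set (pi := INR (rate G l)).
  split.
  - intros Hmin x Hx.
    destruct (HOpt l x Hx) as [U [HU Hinf]].
    destruct (pair_min (locs G) (fun z => edge G l z = true) OptCost pi (lo G) (hi G) x Hx Hne Hc)
      as [t [z [Ht [Hth [_ [Hz Hbest]]]]]].
    assert (Hv1 : pi * t + OptCost z (x + t) <= OptCost l x).
    { apply (inf_lb _ _ _ Hinf). intros a [mu [Vm ->]].
      destruct (GA_min G OptCost HOpt l x U Hx Hnogoal Hout Hmin HU mu Vm) as [s [w [Hs [Hs' [Hw Hle]]]]].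
      apply (ER_le_trans _ (Fin (pi * s + OptCost w (x + s)))); auto. simpl.
      apply Hbest; auto. apply locs_complete. }
    assert (Hv2 : OptCost l x <= pi * t + OptCost z (x + t)).
    { apply eps_le. intros eps He. eapply GB_min; eauto. }
    assert (HH : forall y, exists w, edge G l w = true /\
       MinOf (fun v => exists l', edge G l l' = true /\ v = OptCost l' y) = OptCost w y /\
       forall w', edge G l w' = true -> OptCost w y <= OptCost w' y).
    { intros y. destruct (finite_argmin (locs G) (fun z => edge G l z = true) (fun z => OptCost z y) Hne)
        as [w [_ [Hw Hwm]]].
      exists w. split; auto. split.
      - apply MinOf_eq. split. exists w; auto. intros v' [w' [Hw' ->]]. apply Hwm; auto. apply locs_complete.
      - intros w' Hw'. apply Hwm; auto. apply locs_complete. }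
    unfold minC. symmetry. apply MinOf_eq. split.
    + exists t. split; [lra|]. destruct (HH (x + t)) as [w [Hw [-> Hwm]]].
      specialize (Hwm z Hz). specialize (Hbest t w Ht Hth (locs_complete _ _ w) Hw). fold pi. lra.
    + intros y [s [Hs ->]]. destruct (HH (x + s)) as [w [Hw [-> _]]].
      specialize (Hbest s w ltac:(lra) ltac:(lra) (locs_complete _ _ w) Hw). fold pi. lra.
  - intros Hmax x Hx.
    destruct (HOpt l x Hx) as [U [HU Hinf]].
    destruct (pair_max (locs G) (fun z => edge G l z = true) OptCost pi (lo G) (hi G) x Hx Hne Hc)
      as [t [z [Ht [Hth [_ [Hz Hbest]]]]]].
    assert (Hv1 : pi * t + OptCost z (x + t) <= OptCost l x).
    { apply (inf_lb _ _ _ Hinf). intros a [mu [Vm ->]].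
      exact (GA_max G OptCost HOpt l x U Hx Hnogoal Hurg Hmax HU t z Ht Hth Hz mu Vm). }
    assert (Hv2 : OptCost l x <= pi * t + OptCost z (x + t)).
    { apply eps_le. intros eps He. eapply GB_max; eauto.
      intros s w Hs Hs' Hw. apply Hbest; auto. apply locs_complete. }
    assert (HH : forall y, exists w, edge G l w = true /\
       MaxOf (fun v => exists l', edge G l l' = true /\ v = OptCost l' y) = OptCost w y /\
       forall w', edge G l w' = true -> OptCost w' y <= OptCost w y).
    { intros y. destruct (finite_argmin (locs G) (fun z => edge G l z = true) (fun z => - OptCost z y) Hne)
        as [w [_ [Hw Hwm]]].
      exists w. split; auto. split.
      - apply MaxOf_eq. split. exists w; auto. intros v' [w' [Hw' ->]].
        specialize (Hwm w' (locs_complete _ _ w') Hw'). lra.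
      - intros w' Hw'. specialize (Hwm w' (locs_complete _ _ w') Hw'). lra. }
    unfold maxC. symmetry. apply MaxOf_eq. split.
    + exists t. split; [lra|]. destruct (HH (x + t)) as [w [Hw [-> Hwm]]].
      specialize (Hwm z Hz). specialize (Hbest t w Ht Hth (locs_complete _ _ w) Hw). fold pi. lra.
    + intros y [s [Hs ->]]. destruct (HH (x + s)) as [w [Hw [-> _]]].
      specialize (Hbest s w ltac:(lra) ltac:(lra) (locs_complete _ _ w) Hw). fold pi. lra.
Qed.
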